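(* Let $f : \mathbb{R} \to \mathbb{R}$ and $g : \mathbb{R}^n \to \mathbb{R}$, and let $\bar x \in \mathbb{R}^n$. Let $g_{ave}$ be a concave underestimator of $g$ at $\bar x$, let $f_{ave}$ be a concave underestimator of $f$ at $g(\bar x)$, and let $g^{vex}$ be a convex overestimator of $g$ at $\bar x$. Then \[ h(x) := \min \{ f_{ave}(g_{ave}(x)),\ f_{ave}(g^{vex}(x)) \} \] is a concave underestimator of $x \mapsto f(g(x))$ at $\bar x$.
   Context: For a function $\phi : \mathbb{R}^d \to \mathbb{R}$ and a point $\bar y \in \mathbb{R}^d$, a function $\phi_{ave} : \mathbb{R}^d \to \mathbb{R}$ is a concave underestimator of $\phi$ at $\bar y$ if $\phi_{ave}$ is concave, $\phi_{ave}(y) \le \phi(y)$ for all $y \in \mathbb{R}^d$, and $\phi_{ave}(\bar y) = \phi(\bar y)$. Similarly, $\phi^{vex} : \mathbb{R}^d \to \mathbb{R}$ is a convex overestimator of $\phi$ at $\bar y$ if $\phi^{vex}$ is convex, $\phi^{vex}(y) \ge \phi(y)$ for all $y \in \mathbb{R}^d$, and $\phi^{vex}(\bar y) = \phi(\bar y)$. *)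

(* Defs.v *)
From HB Require Import structures.
From mathcomp Require Import all_boot all_order all_algebra.
From mathcomp Require Import all_classical all_reals.
From mathcomp Require Import interval_inference convex.
Set Implicit Arguments. Unset Strict Implicit. Unset Printing Implicit Defensive.
Import Order.TTheory GRing.Theory Num.Theory.
Local Open Scope ring_scope.
Local Open Scope convex_scope.
Local Open Scope classical_set_scope.

Definition concave_function (R : numFieldType) (E : lmodType R)
    (E' := convex_lmodType E) (D : set E') (f : E' -> R^o) :=
  forall (t : {i01 R}),
    {in D &, forall (x y : E'), (f x <| t |> f y <= f (x <| t |> y))%R}.

Definition concave_underestimator (R : numFieldType) (E : lmodType R)
    (phi phi_ave : E -> R) (ybar : E) : Prop :=
  concave_function [set: convex_lmodType E] (phi_ave : convex_lmodType E -> R^o) /\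
  (forall y, phi_ave y <= phi y) /\ phi_ave ybar = phi ybar.

Definition convex_overestimator (R : numFieldType) (E : lmodType R)
    (phi phi_vex : E -> R) (ybar : E) : Prop :=
  convex_function [set: convex_lmodType E] (phi_vex : convex_lmodType E -> R^o) /\
  (forall y, phi y <= phi_vex y) /\ phi_vex ybar = phi ybar.

(* Main.v *)
Require Import Defs.
From HB Require Import structures.
From mathcomp Require Import all_boot all_order all_algebra.
From mathcomp Require Import all_classical all_reals.
From mathcomp Require Import interval_inference convex.
From mathcomp Require Import ring lra.
Import Order.TTheory GRing.Theory Num.Theory.
Local Open Scope ring_scope.
Local Open Scope convex_scope.

Lemma mkt (R : realType) (s : R) : 0 <= s -> s <= 1 -> exists t : {i01 R}, t%:num = s.
Proof. by move=> h0 h1; exists (Itv01 h0 h1). Qed.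

Lemma minA (R : realType) (F : R -> R) :
  concave_function [set: convex_lmodType R^o] (F : convex_lmodType R^o -> R^o) ->
  forall a b y : R, a <= y -> y <= b -> Num.min (F a) (F b) <= F y.
Proof.
move=> Fc a b y ay yb.
have [ab|ab] := eqVneq a b.
  have -> : y = a by apply/eqP; rewrite eq_le ay /= ab yb.
  by rewrite ge_min lexx.
have ba : 0 < b - a by rewrite subr_gt0 lt_neqAle ab /=; exact: le_trans yb.
have [t ht] : exists t : {i01 R}, t%:num = (b - y) / (b - a).
  apply: mkt; first by apply: divr_ge0; [rewrite subr_ge0 | exact: ltW].
  by rewrite ler_pdivrMr // mul1r; lra.
have H := Fc t a b (in_setT _) (in_setT _).
have E : ((a : convex_lmodType R^o) <| t |> (b : convex_lmodType R^o)) = y.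
  rewrite /conv /= ht /unstable.onem.
  change (((b - y) / (b - a)) * a + (1 - (b - y) / (b - a)) * b = y).
  by field; rewrite gt_eqF.
rewrite E convRE in H.
have t0 : 0 <= t%:num by [].
have t1 : t%:num <= 1 by [].
have m1 : Num.min (F a) (F b) <= F a by rewrite ge_min lexx.
have m2 : Num.min (F a) (F b) <= F b by rewrite ge_min lexx orbT.
move: H; rewrite /unstable.onem; set m := Num.min _ _ => H.
apply: le_trans H.
have h1 : t%:num * m <= t%:num * F a by apply: ler_wpM2l.
have t1' : 0 <= 1 - t%:num by lra.
have h2 : (1 - t%:num) * m <= (1 - t%:num) * F b by apply: (ler_wpM2l t1').
lra.
Qed.

Lemma convE (R : realType) (t : {i01 R}) (a b : R^o) :
  a <| t |> b = t%:num * a + (1 - t%:num) * b.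
Proof. by []. Qed.

Lemma conv_mono (R : realType) (t : {i01 R}) (a b c d : R^o) :
  a <= c -> b <= d -> a <| t |> b <= c <| t |> d.
Proof.
move=> ac bd; rewrite !convE.
have t0 : 0 <= t%:num by [].
have t1 : 0 <= 1 - t%:num by have : t%:num <= 1 by []; lra.
have h1 : t%:num * a <= t%:num * c by apply: (ler_wpM2l t0).
have h2 : (1 - t%:num) * b <= (1 - t%:num) * d by apply: (ler_wpM2l t1).
lra.
Qed.


Lemma key (R : realType) (F : R -> R) :
  concave_function [set: convex_lmodType R^o] (F : convex_lmodType R^o -> R^o) ->
  forall (t : {i01 R}) (lo1 hi1 lo2 hi2 y : R^o),
  lo1 <= hi1 -> lo2 <= hi2 -> lo1 <| t |> lo2 <= y -> y <= hi1 <| t |> hi2 ->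
  (Num.min (F lo1) (F hi1) : R^o) <| t |> (Num.min (F lo2) (F hi2) : R^o) <= F y.
Proof.
move=> Fc t lo1 hi1 lo2 hi2 y l1 l2 Ly yU.
have t0 : 0 <= t%:num by [].
have t1 : t%:num <= 1 by [].
move: Ly yU; rewrite !convE => Ly yU.
set L := t%:num * lo1 + (1 - t%:num) * lo2 in Ly *.
set U := t%:num * hi1 + (1 - t%:num) * hi2 in yU *.
have [s [s0 s1 ys]] : exists s : R, [/\ 0 <= s, s <= 1 & y = s * U + (1 - s) * L].
  have [UL|UL] := eqVneq U L.
    exists 0; split; [lra | lra | ].
    rewrite mul0r add0r subr0 mul1r; lra.
  have UL0 : 0 < U - L by rewrite subr_gt0 lt_neqAle eq_sym UL /=; exact: le_trans yU.
  exists ((y - L) / (U - L)); split.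
  - by apply: divr_ge0; [rewrite subr_ge0 | exact: ltW].
  - by rewrite ler_pdivrMr // mul1r; lra.
  - by field; rewrite gt_eqF.
set y1 := s * hi1 + (1 - s) * lo1.
set y2 := s * hi2 + (1 - s) * lo2.
have H := Fc t y1 y2 (in_setT _) (in_setT _).
have E : ((y1 : convex_lmodType R^o) <| t |> (y2 : convex_lmodType R^o)) = y.
  rewrite /conv /= /unstable.onem.
  change (t%:num * y1 + (1 - t%:num) * y2 = y).
  by rewrite ys /y1 /y2 /U /L; ring.
rewrite E in H.
have d1 : 0 <= s * (hi1 - lo1) by apply: mulr_ge0; lra.
have d2 : 0 <= s * (hi2 - lo2) by apply: mulr_ge0; lra.
have e1 : 0 <= (1 - s) * (hi1 - lo1) by apply: mulr_ge0; lra.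
have e2 : 0 <= (1 - s) * (hi2 - lo2) by apply: mulr_ge0; lra.
apply: le_trans H; apply: conv_mono; apply: minA => //; rewrite /y1 /y2; lra.
Qed.

Theorem theorem1 (R : realType) (n : nat)
    (f : R -> R) (g : 'rV[R]_n -> R) (xbar : 'rV[R]_n)
    (g_ave : 'rV[R]_n -> R) (f_ave : R -> R) (g_vex : 'rV[R]_n -> R) :
  concave_underestimator g g_ave xbar ->
  @concave_underestimator R R^o f f_ave (g xbar) ->
  convex_overestimator g g_vex xbar ->
  concave_underestimator (fun x => f (g x))
    (fun x => Num.min (f_ave (g_ave x)) (f_ave (g_vex x))) xbar.
Proof.
move=> [gc [gl ge]] [fc [fl fe]] [vc [vl ve]].
split; last split.
- move=> t x1 x2 _ _ /=.
  set z := x1 <| t |> x2.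
  have Hlo := gc t x1 x2 (in_setT _) (in_setT _).
  have Hhi := vc t x1 x2 (in_setT _) (in_setT _).
  rewrite -/z in Hlo Hhi.
  have Lz : g_ave z <= g_vex z := le_trans (gl z) (vl z).
  rewrite le_min; apply/andP; split; apply: key => //;
    try exact: (le_trans (gl _) (vl _)).
  - exact: le_trans Lz Hhi.
  - exact: le_trans Hlo Lz.
- move=> x /=.
  apply: le_trans (fl (g x)).
  exact: minA fc _ _ _ (gl x) (vl x).
- by rewrite /= ge ve minxx fe.
Qed.
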